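(* Let $\mathbf L\in\mathbb R_+^{n\times k}$ and let $\boldsymbol\psi:\mathcal C\to\mathbb R_+^n$ be a surrogate loss on a convex set $\mathcal C\subseteq\mathbb R^d$. Then $\boldsymbol\psi$ is $\mathbf L$-calibrated if and only if there exists a function $\mathrm{pred}':\mathcal S_\psi\to[k]$ such that for every $\mathbf p\in\Delta_n$ and every sequence $\{\mathbf z_m\}$ in $\mathcal S_\psi$ with $\lim_{m\to\infty}\mathbf p^\top\mathbf z_m=\inf_{\mathbf z\in\mathcal S_\psi}\mathbf p^\top\mathbf z$, we have $\mathbf p^\top\boldsymbol\ell_{\mathrm{pred}'(\mathbf z_m)}=\min_{t\in[k]}\mathbf p^\top\boldsymbol\ell_t$ for all sufficiently large $m$.
   Context: Notation: $[m]=\{1,\dots,m\}$; $\Delta_n=\{\mathbf p\in\mathbb R_+^n:\sum_i p_i=1\}$. A loss matrix $\mathbf L\in\mathbb R_+^{n\times k}$ has columns $\boldsymbol\ell_t$, $t\in[k]$. $\mathcal R_\psi=\boldsymbol\psi(\mathcal C)$, $\mathcal S_\psi=\operatorname{conv}(\mathcal R_\psi)$. $\boldsymbol\psi$ is $\mathbf L$-calibrated if there is $\mathrm{pred}:\mathcal C\to[k]$ such that for all $\mathbf p\in\Delta_n$: $\inf_{\mathbf u\in\mathcal C:\mathrm{pred}(\mathbf u)\notin\operatorname{argmin}_t\mathbf p^\top\boldsymbol\ell_t}\mathbf p^\top\boldsymbol\psi(\mathbf u)>\inf_{\mathbf u\in\mathcal C}\mathbf p^\top\boldsymbol\psi(\mathbf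 u)$ (an infimum over the empty set is $+\infty$). *)

(* Defs.v *)
(* classical reals. Vectors in R^m are functions nat -> R;
   only coordinates 0..m-1 are meaningful. *)
From Stdlib Require Import Reals.
Open Scope R_scope.

Fixpoint dot (n : nat) (p z : nat -> R) : R :=
  match n with
  | O => 0
  | S m => dot m p z + p m * z m
  end.

Definition vec_in (m : nat) (v : nat -> R) : Prop :=
  forall i, (m <= i)%nat -> v i = 0.

Definition in_simplex (n : nat) (p : nat -> R) : Prop :=
  (forall i, (i < n)%nat -> 0 <= p i) /\ dot n p (fun _ => 1) = 1.

Definition convex_subset (d : nat) (C : (nat -> R) -> Prop) : Prop :=
  (forall u, C u -> vec_in d u) /\
  (forall u v t, C u -> C v -> 0 <= t <= 1 ->
     C (fun i => t * u i + (1 - t) * v i)).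

Definition R_psi (n : nat) (C : (nat -> R) -> Prop) (psi : (nat -> R) -> nat -> R)
  (x : nat -> R) : Prop :=
  exists u, C u /\ forall i, (i < n)%nat -> x i = psi u i.

Definition conv (n : nat) (A : (nat -> R) -> Prop) (z : nat -> R) : Prop :=
  vec_in n z /\
  exists (m : nat) (lam : nat -> R) (a : nat -> nat -> R),
    (forall j, (j < m)%nat -> 0 <= lam j /\ A (a j)) /\
    dot m lam (fun _ => 1) = 1 /\
    forall i, (i < n)%nat -> z i = dot m lam (fun j => a j i).

Definition S_psi (n : nat) (C : (nat -> R) -> Prop) (psi : (nat -> R) -> nat -> R) :=
  conv n (R_psi n C psi).

Definition is_glb (A : R -> Prop) (m : R) : Prop :=
  (forall x, A x -> m <= x) /\ (forall b, (forall x, A x -> b <= x) -> b <= m).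

Definition col (L : nat -> nat -> R) (t : nat) : nat -> R := fun i => L i t.

Definition optimal (n k : nat) (L : nat -> nat -> R) (p : nat -> R) (t : nat) : Prop :=
  (t < k)%nat /\
  forall t', (t' < k)%nat -> dot n p (col L t) <= dot n p (col L t').

(* psi is L-calibrated; an infimum over the empty set is +infinity,
   so the strict inequality holds trivially when the left set is empty. *)
Definition calibrated (n k : nat) (L : nat -> nat -> R)
  (C : (nat -> R) -> Prop) (psi : (nat -> R) -> nat -> R) : Prop :=
  exists pred : (nat -> R) -> nat,
    (forall u, C u -> (pred u < k)%nat) /\
    forall p, in_simplex n p ->
      let Abad := fun r => exists u, C u /\ ~ optimal n k L p (pred u) /\ r = dot n p (psi u) in
      let Aall := fun r => exists u, C u /\ r = dot n p (psi u) in
      (forall r, ~ Abad r) \/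
      exists a b, is_glb Abad a /\ is_glb Aall b /\ b < a.

(* Main.v *)
Require Import Defs.
From Stdlib Require Import Reals Lra Lia ClassicalEpsilon Classical.
Open Scope R_scope.

Fixpoint sumf (n : nat) (f : nat -> R) : R :=
  match n with O => 0 | S m => sumf m f + f m end.

Lemma dot_sumf n p z : dot n p z = sumf n (fun i => p i * z i).
Proof. induction n; simpl; [reflexivity| rewrite IHn; reflexivity]. Qed.

Lemma sumf_ext n f g : (forall i, (i < n)%nat -> f i = g i) -> sumf n f = sumf n g.
Proof.
  induction n; intros H; simpl; [reflexivity|].
  rewrite IHn by (intros; apply H; lia). rewrite H by lia. reflexivity.
Qed.

Lemma sumf_add n f g : sumf n (fun i => f i + g i) = sumf n f + sumf n g.
Proof. induction n; simpl; [lra| rewrite IHn; lra]. Qed.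

Lemma sumf_scale n c f : sumf n (fun i => c * f i) = c * sumf n f.
Proof. induction n; simpl; [lra| rewrite IHn; lra]. Qed.

Lemma sumf_zero n : sumf n (fun _ => 0) = 0.
Proof. induction n; simpl; [lra| rewrite IHn; lra]. Qed.

Lemma sumf_swap n m f :
  sumf n (fun i => sumf m (fun j => f i j)) = sumf m (fun j => sumf n (fun i => f i j)).
Proof.
  induction n; simpl.
  - symmetry. apply sumf_zero.
  - rewrite IHn, <- sumf_add. reflexivity.
Qed.

Lemma sumf_nonneg n f : (forall i, (i < n)%nat -> 0 <= f i) -> 0 <= sumf n f.
Proof.
  induction n; intros H; simpl; [lra|].
  assert (0 <= sumf n f) by (apply IHn; intros; apply H; lia).
  assert (0 <= f n) by (apply H; lia). lra.
Qed.

Lemma sumf_le n f g : (forall i, (i < n)%nat -> f i <= g i) -> sumf n f <= sumf n g.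
Proof.
  induction n; intros H; simpl; [lra|].
  assert (sumf n f <= sumf n g) by (apply IHn; intros; apply H; lia).
  assert (f n <= g n) by (apply H; lia). lra.
Qed.

Lemma sumf_ge_term n f j : (forall i, (i < n)%nat -> 0 <= f i) -> (j < n)%nat ->
  f j <= sumf n f.
Proof.
  induction n; intros H Hj; simpl; [lia|].
  destruct (Nat.eq_dec j n) as [->|Hne].
  - assert (0 <= sumf n f) by (apply sumf_nonneg; intros; apply H; lia). lra.
  - assert (f j <= sumf n f) by (apply IHn; [intros; apply H; lia| lia]).
    assert (0 <= f n) by (apply H; lia). lra.
Qed.

Lemma sumf_const n c : sumf n (fun _ => c) = INR n * c.
Proof. induction n; simpl sumf; [simpl; lra|]. rewrite IHn, S_INR. lra. Qed.

Lemma sumf_upd m j0 x f : (j0 < m)%nat ->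
  sumf m (fun j => if Nat.eqb j j0 then x else f j) = sumf m f - f j0 + x.
Proof.
  induction m; intros H; [lia|]. simpl.
  destruct (Nat.eq_dec j0 m) as [->|Hne].
  - rewrite Nat.eqb_refl.
    rewrite (sumf_ext m _ f). lra.
    intros i Hi. destruct (Nat.eqb_spec i m); [lia|reflexivity].
  - rewrite IHm by lia. destruct (Nat.eqb_spec m j0); [lia|]. lra.
Qed.

Lemma sumf_replace m j0 f : (j0 < S m)%nat ->
  sumf m (fun j => if Nat.eqb j j0 then f m else f j) = sumf (S m) f - f j0.
Proof.
  intros H. destruct (Nat.eq_dec j0 m) as [->|Hne].
  - simpl. rewrite (sumf_ext m _ f). lra.
    intros i Hi. destruct (Nat.eqb_spec i m); [lia|reflexivity].
  - rewrite sumf_upd by lia. simpl. lra.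
Qed.

Lemma sumf_nonpos_zero n f : (forall i, (i < n)%nat -> f i <= 0) -> sumf n f = 0 ->
  forall j, (j < n)%nat -> f j = 0.
Proof.
  intros H Hs j Hj.
  assert (- f j <= sumf n (fun i => - f i)).
  { apply (sumf_ge_term n (fun i => - f i)); [intros i Hi; specialize (H i Hi); lra| auto]. }
  rewrite (sumf_ext n _ (fun i => -1 * f i)) in H0 by (intros; ring).
  rewrite sumf_scale, Hs in H0. specialize (H j Hj). lra.
Qed.

Lemma argmin_ex m (P : nat -> Prop) (f : nat -> R) :
  (exists j, (j < m)%nat /\ P j) ->
  exists j, (j < m)%nat /\ P j /\ forall i, (i < m)%nat -> P i -> f j <= f i.
Proof.
  induction m; intros [j0 [Hj0 HP0]]; [lia|].
  destruct (classic (exists j, (j < m)%nat /\ P j)) as [Hex|Hno].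
  - destruct (IHm Hex) as [j [Hj [HPj Hmin]]].
    destruct (classic (P m /\ f m < f j)) as [[HPm Hlt]|Hn].
    + exists m. repeat split; auto. intros i Hi HPi.
      destruct (Nat.eq_dec i m) as [->|]; [lra|].
      specialize (Hmin i ltac:(lia) HPi). lra.
    + exists j. repeat split; auto. intros i Hi HPi.
      destruct (Nat.eq_dec i m) as [->|].
      * apply Rnot_lt_le. intro. apply Hn. auto.
      * apply Hmin; auto; lia.
  - assert (j0 = m).
    { destruct (Nat.eq_dec j0 m); auto. exfalso. apply Hno. exists j0. split; auto; lia. }
    subst. exists m. repeat split; auto. intros i Hi HPi.
    destruct (Nat.eq_dec i m) as [->|]; [lra|].
    exfalso. apply Hno. exists i. split; auto; lia.
Qed.

Lemma lin_dep N : forall m (v : nat -> nat -> R), (N < m)%nat ->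
  exists mu, (exists j, (j < m)%nat /\ mu j <> 0) /\
    forall i, (i < N)%nat -> sumf m (fun j => mu j * v j i) = 0.
Proof.
  induction N as [|N IH]; intros m v Hm.
  - exists (fun _ => 1). split; [exists 0%nat; split; [lia|lra]|]. intros; lia.
  - destruct (classic (exists j0, (j0 < m)%nat /\ v j0 N <> 0)) as [[j0 [Hj0 Hv]]|Hno].
    + destruct m as [|m']; [lia|].
      set (pi := fun j => if Nat.eqb j j0 then m' else j).
      set (r := fun j => v (pi j) N / v j0 N).
      set (w := fun j i => v (pi j) i - r j * v j0 i).
      destruct (IH m' w ltac:(lia)) as [nu [[j1 [Hj1 Hnu]] Hz]].
      set (c := - sumf m' (fun j => nu j * r j)).
      set (rho := fun j => if Nat.eqb j m' then j0 else j).
      exists (fun j => if Nat.eqb j j0 then c else nu (rho j)).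
      assert (Hmp : forall j, (j < m')%nat ->
        (if Nat.eqb (pi j) j0 then c else nu (rho (pi j))) = nu j).
      { intros j Hj. unfold pi, rho. destruct (Nat.eqb_spec j j0).
        - destruct (Nat.eqb_spec m' j0); [lia|]. rewrite Nat.eqb_refl. subst; reflexivity.
        - destruct (Nat.eqb_spec j j0); [lia|]. destruct (Nat.eqb_spec j m'); [lia|]. reflexivity. }
      assert (Hpi : forall j, (j < m')%nat -> (pi j < S m')%nat).
      { intros j Hj; unfold pi; destruct (Nat.eqb j j0); lia. }
      split.
      * exists (pi j1). split; auto. rewrite Hmp; auto.
      * assert (Hsum : forall x : nat -> R,
          sumf (S m') (fun j => (if Nat.eqb j j0 then c else nu (rho j)) * x j)
          = c * x j0 + sumf m' (fun j => nu j * x (pi j))).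
        { intros x.
          pose proof (sumf_replace m' j0
             (fun j => (if Nat.eqb j j0 then c else nu (rho j)) * x j) Hj0) as HR.
          simpl in HR. rewrite Nat.eqb_refl in HR.
          assert (sumf m' (fun j => nu j * x (pi j)) =
            sumf m' (fun j => if Nat.eqb j j0 then
               (if Nat.eqb m' j0 then c else nu (rho m')) * x m'
               else (if Nat.eqb j j0 then c else nu (rho j)) * x j)).
          { apply sumf_ext. intros j Hj. rewrite <- (Hmp j Hj). unfold pi.
            destruct (j =? j0) eqn:E; [reflexivity|rewrite E; reflexivity]. }
          rewrite H, HR. simpl. ring. }
        intros i Hi. rewrite Hsum.
        assert (Hw0 : sumf m' (fun j => nu j * w j i) = 0).
        { destruct (Nat.eq_dec i N) as [->|Hne].
          - rewrite <- (sumf_zero m'). apply sumf_ext. intros j Hj.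
            unfold w, r. field_simplify; [ring| auto].
          - apply Hz; lia. }
        rewrite (sumf_ext m' _ (fun j => nu j * w j i + (nu j * r j) * v j0 i))
          by (intros; unfold w; ring).
        rewrite sumf_add, Hw0.
        rewrite (sumf_ext m' _ (fun j => v j0 i * (nu j * r j))) by (intros; ring).
        rewrite sumf_scale. unfold c. ring.
    + destruct (IH m v ltac:(lia)) as [mu [Hnz Hz]]. exists mu. split; auto.
      intros i Hi. destruct (Nat.eq_dec i N) as [->|Hne]; [|apply Hz; lia].
      rewrite <- (sumf_zero m). apply sumf_ext. intros j Hj.
      assert (v j N = 0). { apply NNPP. intro. apply Hno. exists j. auto. }
      rewrite H. ring.
Qed.

Lemma carath n (A : (nat -> R) -> Prop) : forall B m lam a z, (m <= B)%nat ->
  (forall j, (j < m)%nat -> 0 <= lam j /\ A (a j)) -> sumf m lam = 1 ->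
  (forall i, (i < n)%nat -> z i = sumf m (fun j => lam j * a j i)) ->
  exists m' lam' a', (m' <= S n)%nat /\
    (forall j, (j < m')%nat -> 0 <= lam' j /\ A (a' j)) /\ sumf m' lam' = 1 /\
    forall i, (i < n)%nat -> z i = sumf m' (fun j => lam' j * a' j i).
Proof.
  induction B as [|B IH]; intros m lam a z HB Hla Hs Hz.
  - exists m, lam, a. repeat split; auto; try lia; apply Hla; auto.
  - destruct (Compare_dec.le_lt_dec m (S n)) as [Hle|Hgt].
    { exists m, lam, a. repeat split; auto; apply Hla; auto. }
    set (v := fun j i => if Nat.ltb i n then a j i else 1).
    destruct (lin_dep (S n) m v Hgt) as [mu [[j1 [Hj1 Hmu1]] Hmu]].
    assert (Hmua : forall i, (i < n)%nat -> sumf m (fun j => mu j * a j i) = 0).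
    { intros i Hi. rewrite <- (Hmu i ltac:(lia)). apply sumf_ext. intros j Hj.
      unfold v. destruct (Nat.ltb_spec i n); [reflexivity|lia]. }
    assert (Hmus : sumf m mu = 0).
    { rewrite <- (Hmu n ltac:(lia)). apply sumf_ext. intros j Hj.
      unfold v. destruct (Nat.ltb_spec n n); [lia|ring]. }
    assert (Hpos : exists j, (j < m)%nat /\ 0 < mu j).
    { apply NNPP; intro Hno. apply Hmu1. apply (sumf_nonpos_zero m mu); auto.
      intros i Hi. apply Rnot_lt_le. intro. apply Hno. exists i; auto. }
    destruct (argmin_ex m (fun j => 0 < mu j) (fun j => lam j / mu j) Hpos)
      as [js [Hjs [Hmjs Hmin]]].
    set (t := lam js / mu js).
    set (lam1 := fun j => lam j - t * mu j).
    assert (Hl1 : forall j, (j < m)%nat -> 0 <= lam1 j).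
    { intros j Hj. unfold lam1. destruct (Hla j Hj) as [Hlj _].
      destruct (Hla js Hjs) as [Hljs _].
      assert (Ht : 0 <= t) by (unfold t; unfold Rdiv; apply Rmult_le_pos; [lra| left; apply Rinv_0_lt_compat; lra]).
      destruct (Rle_lt_dec (mu j) 0) as [Hn|Hp].
      - nra.
      - specialize (Hmin j Hj Hp). fold t in Hmin.
        assert (t * mu j <= lam j / mu j * mu j) by (apply Rmult_le_compat_r; lra).
        replace (lam j / mu j * mu j) with (lam j) in H by (field; lra). lra. }
    assert (Hl1s : lam1 js = 0) by (unfold lam1, t; field; lra).
    assert (Hs1 : sumf m lam1 = 1).
    { unfold lam1. rewrite (sumf_ext m _ (fun j => lam j + (-t) * mu j)) by (intros; ring).
      rewrite sumf_add, sumf_scale, Hs, Hmus. ring. }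
    assert (Hz1 : forall i, (i < n)%nat -> z i = sumf m (fun j => lam1 j * a j i)).
    { intros i Hi. unfold lam1.
      rewrite (sumf_ext m _ (fun j => lam j * a j i + (-t) * (mu j * a j i))) by (intros; ring).
      rewrite sumf_add, sumf_scale, Hmua, <- Hz by auto. ring. }
    destruct m as [|m']; [lia|].
    set (lam2 := fun j => if Nat.eqb j js then lam1 m' else lam1 j).
    set (a2 := fun j => if Nat.eqb j js then a m' else a j).
    apply (IH m' lam2 a2 z); [lia| | |].
    + intros j Hj. unfold lam2, a2. destruct (j =? js).
      * split; [apply Hl1; lia| apply Hla; lia].
      * split; [apply Hl1; lia| apply Hla; lia].
    + unfold lam2. rewrite sumf_replace by auto. lra.
    + intros i Hi. rewrite (Hz1 i Hi).
      pose proof (sumf_replace m' js (fun j => lam1 j * a j i) Hjs) as HR.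
      simpl in HR |- *.
      rewrite (sumf_ext m' (fun j => lam2 j * a2 j i) (fun j => if j =? js then lam1 m' * a m' i else lam1 j * a j i)).
      * rewrite HR, Hl1s. ring.
      * intros j Hj. unfold lam2, a2. destruct (j =? js); reflexivity.
Qed.

Lemma heavy n m lam : (forall j, (j < m)%nat -> 0 <= lam j) -> sumf m lam = 1 ->
  (m <= S n)%nat -> exists j, (j < m)%nat /\ 0 <= lam j /\ 1 <= INR (S n) * lam j.
Proof.
  intros Hnn Hs Hm. destruct m as [|m0]; [simpl in Hs; lra|].
  destruct (argmin_ex (S m0) (fun _ => True) (fun j => - lam j)) as [j [Hj [_ Hmax]]].
  { exists 0%nat. split; [lia|auto]. }
  exists j. split; auto. split; [apply Hnn; auto|].
  assert (sumf (S m0) lam <= sumf (S m0) (fun _ => lam j)).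
  { apply sumf_le. intros i Hi. specialize (Hmax i Hi I). lra. }
  rewrite sumf_const in H.
  assert (INR (S m0) <= INR (S n)) by (apply le_INR; auto).
  assert (0 <= lam j) by (apply Hnn; auto).
  assert (INR (S m0) * lam j <= INR (S n) * lam j) by (apply Rmult_le_compat_r; auto).
  lra.
Qed.

Lemma dot_ext n p z z' : (forall i, (i < n)%nat -> z i = z' i) -> dot n p z = dot n p z'.
Proof. intros H. rewrite !dot_sumf. apply sumf_ext. intros i Hi. rewrite H; auto. Qed.

Lemma dot_conv n m p z lam a :
  (forall i, (i < n)%nat -> z i = sumf m (fun j => lam j * a j i)) ->
  dot n p z = sumf m (fun j => lam j * dot n p (a j)).
Proof.
  intros H. rewrite dot_sumf.
  rewrite (sumf_ext n _ (fun i => sumf m (fun j => p i * (lam j * a j i)))).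
  - rewrite sumf_swap. apply sumf_ext. intros j Hj. rewrite dot_sumf, <- sumf_scale.
    apply sumf_ext. intros; ring.
  - intros i Hi. rewrite H by auto. rewrite <- sumf_scale. reflexivity.
Qed.

Definition KP n C (psi : (nat -> R) -> nat -> R) (z u : nat -> R) : Prop :=
  C u /\ forall p, (forall i, (i < n)%nat -> 0 <= p i) ->
    forall b, (forall u', C u' -> b <= dot n p (psi u')) ->
    dot n p (psi u) - b <= INR (S n) * (dot n p z - b).

Lemma key n C psi z : S_psi n C psi z -> exists u, KP n C psi z u.
Proof.
  intros [_ [m [lam [a [H1 [H2 H3]]]]]].
  assert (Hs : sumf m lam = 1).
  { rewrite <- H2, dot_sumf. apply sumf_ext. intros; ring. }
  assert (Hz : forall i, (i < n)%nat -> z i = sumf m (fun j => lam j * a j i)).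
  { intros i Hi. rewrite H3, dot_sumf by auto. reflexivity. }
  destruct (carath n (R_psi n C psi) m m lam a z (le_n _) H1 Hs Hz)
    as [m' [lam' [a' [Hm' [Hla [Hs' Hz']]]]]].
  destruct (heavy n m' lam') as [j1 [Hj1 [Hl1 Hh]]]; auto.
  { intros j Hj; apply Hla; auto. }
  destruct (proj2 (Hla j1 Hj1)) as [u [Hu Hau]].
  exists u. split; auto. intros p Hp b Hb.
  rewrite (dot_conv n m' p z lam' a' Hz').
  assert (Hg : forall j, (j < m')%nat -> b <= dot n p (a' j)).
  { intros j Hj. destruct (proj2 (Hla j Hj)) as [u' [Hu' Ha']].
    rewrite (dot_ext n p _ (psi u')) by auto. apply Hb; auto. }
  assert (E : sumf m' (fun j => lam' j * dot n p (a' j)) - b =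
              sumf m' (fun j => lam' j * (dot n p (a' j) - b))).
  { rewrite (sumf_ext m' (fun j => lam' j * (dot n p (a' j) - b))
        (fun j => lam' j * dot n p (a' j) + (-b) * lam' j)) by (intros; ring).
    rewrite sumf_add, sumf_scale, Hs'. ring. }
  rewrite E.
  assert (Hge := sumf_ge_term m' (fun j => lam' j * (dot n p (a' j) - b)) j1).
  simpl in Hge.
  assert (Hge' : lam' j1 * (dot n p (a' j1) - b) <=
     sumf m' (fun j => lam' j * (dot n p (a' j) - b))).
  { apply Hge; auto. intros i Hi. apply Rmult_le_pos; [apply Hla; auto|].
    specialize (Hg i Hi). lra. }
  rewrite (dot_ext n p (a' j1) (psi u)) in Hge' by auto.
  assert (Hg1 : b <= dot n p (psi u)) by (apply Hb; auto).
  assert (HK : 0 <= INR (S n)) by apply pos_INR.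
  set (g := dot n p (psi u) - b) in *.
  set (D := sumf m' (fun j => lam' j * (dot n p (a' j) - b))) in *.
  assert (0 <= g) by (unfold g; lra).
  assert (g <= INR (S n) * lam' j1 * g) by nra.
  assert (INR (S n) * (lam' j1 * g) <= INR (S n) * D) by (apply Rmult_le_compat_l; auto).
  nra.
Qed.

Lemma glb_ex (A : R -> Prop) : (exists x, A x) -> (exists c, forall x, A x -> c <= x) ->
  exists b, is_glb A b.
Proof.
  intros [x Hx] [c Hc].
  destruct (completeness (fun y => A (- y))) as [m [Hub Hlub]].
  - exists (- c). intros y Hy. specialize (Hc _ Hy). lra.
  - exists (- x). rewrite Ropp_involutive. auto.
  - exists (- m). split.
    + intros y Hy. assert (- y <= m) by (apply Hub; rewrite Ropp_involutive; auto). lra.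
    + intros b Hb. assert (m <= - b).
      { apply Hlub. intros y Hy. specialize (Hb _ Hy). lra. } lra.
Qed.

Lemma glb_transfer (A B : R -> Prop) b : is_glb A b ->
  (forall c, (forall x, A x -> c <= x) <-> (forall x, B x -> c <= x)) -> is_glb B b.
Proof.
  intros [H1 H2] E. split.
  - apply E; auto.
  - intros c Hc. apply H2. apply E; auto.
Qed.

Lemma glb_unique A a b : is_glb A a -> is_glb A b -> a = b.
Proof.
  intros [Ha1 Ha2] [Hb1 Hb2]. apply Rle_antisym; [apply Hb2| apply Ha2]; auto.
Qed.

Definition tr n (psi : (nat -> R) -> nat -> R) u : nat -> R :=
  fun i => if Nat.ltb i n then psi u i else 0.

Lemma tr_S n C psi u : C u -> S_psi n C psi (tr n psi u).
Proof.
  intros Hu. split.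
  - intros i Hi. unfold tr. destruct (Nat.ltb_spec i n); [lia|reflexivity].
  - exists 1%nat, (fun _ => 1), (fun _ => tr n psi u). split; [|split].
    + intros j Hj. split; [lra|]. exists u. split; auto.
      intros i Hi. unfold tr. destruct (Nat.ltb_spec i n); [reflexivity|lia].
    + simpl. ring.
    + intros i Hi. simpl. ring.
Qed.

Lemma dot_tr n p psi u : dot n p (tr n psi u) = dot n p (psi u).
Proof. apply dot_ext. intros i Hi. unfold tr. destruct (Nat.ltb_spec i n); [reflexivity|lia]. Qed.

Lemma lb_equiv n C psi p : (forall i, (i < n)%nat -> 0 <= p i) -> forall c,
  (forall r, (exists z, S_psi n C psi z /\ r = dot n p z) -> c <= r) <->
  (forall r, (exists u, C u /\ r = dot n p (psi u)) -> c <= r).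
Proof.
  intros Hp c. split.
  - intros H r [u [Hu ->]]. rewrite <- dot_tr. apply H. exists (tr n psi u).
    split; auto. apply tr_S; auto.
  - intros H r [z [[_ [m [lam [a [H1 [H2 H3]]]]]] ->]].
    assert (Hs : sumf m lam = 1).
    { rewrite <- H2, dot_sumf. apply sumf_ext. intros; ring. }
    rewrite (dot_conv n m p z lam a).
    + apply Rle_trans with (sumf m (fun j => lam j * c)).
      * rewrite (sumf_ext m _ (fun j => c * lam j)) by (intros; ring).
        rewrite sumf_scale, Hs. lra.
      * apply sumf_le. intros j Hj. destruct (H1 j Hj) as [Hl [u [Hu Ha]]].
        apply Rmult_le_compat_l; auto. rewrite (dot_ext n p _ (psi u)) by auto.
        apply H. exists u; auto.
    + intros i Hi. rewrite H3, dot_sumf by auto. reflexivity.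
Qed.

Lemma dot_nonneg n p z : (forall i, (i < n)%nat -> 0 <= p i) ->
  (forall i, (i < n)%nat -> 0 <= z i) -> 0 <= dot n p z.
Proof.
  intros Hp Hz. rewrite dot_sumf. apply sumf_nonneg. intros i Hi.
  apply Rmult_le_pos; auto.
Qed.

Definition inh0 : inhabited (nat -> R) := inhabits (fun _ => 0).

Theorem mainTheorem19 (n k d : nat) (L : nat -> nat -> R)
  (C : (nat -> R) -> Prop) (psi : (nat -> R) -> nat -> R)
  (HL : forall i t, (i < n)%nat -> (t < k)%nat -> 0 <= L i t)
  (HC : convex_subset d C)
  (HCne : exists u, C u)
  (Hpsi : forall u, C u -> forall i, (i < n)%nat -> 0 <= psi u i) :
  calibrated n k L C psi <->
  exists pred' : (nat -> R) -> nat,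
    (forall z, S_psi n C psi z -> (pred' z < k)%nat) /\
    forall p, in_simplex n p ->
    forall zs : nat -> nat -> R,
      (forall m, S_psi n C psi (zs m)) ->
      (exists b, is_glb (fun r => exists z, S_psi n C psi z /\ r = dot n p z) b /\
                 Un_cv (fun m => dot n p (zs m)) b) ->
      exists M, forall m, (M <= m)%nat -> optimal n k L p (pred' (zs m)).
Proof.
  split.
  - intros [pred [Hpk Hcal]].
    set (ch := fun z => epsilon inh0 (KP n C psi z)).
    assert (Hch : forall z, S_psi n C psi z -> KP n C psi z (ch z)).
    { intros z Hz. apply epsilon_spec. apply key; auto. }
    exists (fun z => pred (ch z)). split.
    { intros z Hz. apply Hpk. apply (Hch z Hz). }
    intros p Hp zs HS [b [Hglb Hcv]].
    assert (Hp0 : forall i, (i < n)%nat -> 0 <= p i) by apply Hp.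
    destruct (Hcal p Hp) as [Hnone | [a [b' [Ha [Hb' Hlt]]]]].
    + exists 0%nat. intros m _. destruct (Hch (zs m) (HS m)) as [Hu _].
      apply NNPP; intro Hno. apply (Hnone (dot n p (psi (ch (zs m))))).
      exists (ch (zs m)). auto.
    + assert (Hbb : b' = b).
      { apply (glb_unique _ _ _ Hb'). eapply glb_transfer; [exact Hglb|].
        apply lb_equiv; auto. }
      subst b'.
      assert (HK : 0 < INR (S n)) by (apply lt_0_INR; lia).
      destruct (Hcv ((a - b) / INR (S n))) as [N HN].
      { apply Rlt_gt. unfold Rdiv. apply Rmult_lt_0_compat; [lra|apply Rinv_0_lt_compat; auto]. }
      exists N. intros m Hm. specialize (HN m Hm). unfold Rdist in HN.
      apply Rabs_def2 in HN. destruct HN as [HN _].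
      destruct (Hch (zs m) (HS m)) as [Hu Hkp].
      assert (Hlb : forall u', C u' -> b <= dot n p (psi u')).
      { intros u' Hu'. apply (proj1 Hb'). exists u'; auto. }
      specialize (Hkp p Hp0 b Hlb).
      assert (INR (S n) * (dot n p (zs m) - b) < INR (S n) * ((a - b) / INR (S n))).
      { apply Rmult_lt_compat_l; auto. }
      replace (INR (S n) * ((a - b) / INR (S n))) with (a - b) in H by (field; lra).
      apply NNPP; intro Hno.
      assert (a <= dot n p (psi (ch (zs m)))).
      { apply (proj1 Ha). exists (ch (zs m)). auto. }
      lra.
  - intros [pred' [Hpk Hconv]].
    exists (fun u => pred' (tr n psi u)). split.
    { intros u Hu. apply Hpk. apply tr_S; auto. }
    intros p Hp Abad Aall.
    assert (Hp0 : forall i, (i < n)%nat -> 0 <= p i) by apply Hp.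
    destruct (classic (exists r, Abad r)) as [[r0 Hr0]|Hno]; [right|left; firstorder].
    assert (Hall0 : forall r, Aall r -> 0 <= r).
    { intros r [u [Hu ->]]. apply dot_nonneg; auto. }
    destruct (glb_ex Abad) as [a Ha].
    { exists r0; auto. }
    { exists 0. intros r [u [Hu [_ ->]]]. apply Hall0. exists u; auto. }
    destruct (glb_ex Aall) as [b Hb].
    { destruct HCne as [u Hu]. exists (dot n p (psi u)). exists u; auto. }
    { exists 0. auto. }
    exists a, b. split; [auto|split; [auto|]].
    apply Rnot_le_lt. intro Hab.
    assert (Hex : forall m : nat, exists u, C u /\ ~ optimal n k L p (pred' (tr n psi u)) /\
                  dot n p (psi u) < a + / (INR m + 1)).
    { intros m. apply NNPP. intro Hne.
      assert (Hpos : 0 < / (INR m + 1)).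
      { apply Rinv_0_lt_compat. pose proof (pos_INR m). lra. }
      assert (a + / (INR m + 1) <= a).
      { apply (proj2 Ha). intros r [u [Hu [Hopt ->]]].
        apply Rnot_lt_le. intro Hlt. apply Hne. exists u. auto. }
      lra. }
    set (us := fun m => epsilon inh0 (fun u => C u /\ ~ optimal n k L p (pred' (tr n psi u)) /\
                  dot n p (psi u) < a + / (INR m + 1))).
    assert (Hus : forall m, C (us m) /\ ~ optimal n k L p (pred' (tr n psi (us m))) /\
                  dot n p (psi (us m)) < a + / (INR m + 1)).
    { intros m. apply epsilon_spec. apply Hex. }
    destruct (Hconv p Hp (fun m => tr n psi (us m))) as [M HM].
    + intros m. apply tr_S. apply Hus.
    + exists b. split.
      * eapply glb_transfer; [exact Hb|]. intros c. symmetry. apply lb_equiv; auto.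
      * intros eps Heps. destruct (archimed_cor1 eps Heps) as [N [HN HN0]].
        exists N. intros m Hm. unfold Rdist. rewrite dot_tr.
        destruct (Hus m) as [Hu [_ Hlt]].
        assert (b <= dot n p (psi (us m))) by (apply (proj1 Hb); exists (us m); auto).
        assert (/ (INR m + 1) <= / INR N).
        { apply Rinv_le_contravar; [apply lt_0_INR; auto|].
          assert (INR N <= INR m) by (apply le_INR; lia). lra. }
        rewrite Rabs_right by lra. lra.
    + destruct (Hus M) as [_ [Hno _]]. apply Hno. apply (HM M). lia.
Qed.
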